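(* Let $D$ be a pv-monoid (idempotent, with symmetric valuation function), $P$ a nonempty finite set of ports, and let $\zeta=\bigoplus_{i\in I}\left(d_i\otimes\sum_{j\in J_i}m_{i,j}\right)\in PCL(D,P)$ be a formula in full normal form, where $I=\{1,\dots,n\}$. Then (i) $*\zeta\equiv\bigoplus_{\emptyset\neq I'\subseteq I}\left(\mathrm{val}(d_i)_{i\in I'}\otimes\left(\biguplus_{i\in I'}\sum_{j\in J_i}m_{i,j}\right)\right)$; (ii) $( *\zeta)\otimes\left(\biguplus_{i\in I}\sum_{j\in J_i}m_{i,j}\right)\equiv\mathrm{val}(d_1,\dots,d_n)\otimes\left(\biguplus_{i\in I}\sum_{j\in J_i}m_{i,j}\right)$. Here $\mathrm{val}(d_i)_{i\in I'}$ denotes $\mathrm{val}$ applied to the values $d_i$, $i\in I'$, in any order, and $\biguplus$ denotes iterated $\uplus$ (in any fixed bracketing).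
   Context: A valuation monoid $(D,\oplus,\mathrm{val},0)$ consists of a commutative monoid $(D,\oplus,0)$ and a map $\mathrm{val}:D^+\to D$ ($D^+$ = nonempty finite sequences over $D$) with $\mathrm{val}(d)=d$ and $\mathrm{val}(d_1,\dots,d_n)=0$ whenever some $d_i=0$. A pv-monoid $(D,\oplus,\mathrm{val},\otimes,0,1)$ is a valuation monoid with a binary operation $\otimes$ and an element $1$ such that $\mathrm{val}(1,\dots,1)=1$ for any $n\ge1$ arguments, $0\otimes d=d\otimes0=0$, $1\otimes d=d\otimes1=d$. Standing assumption: $D$ is idempotent ($d\oplus d=d$) and $\mathrm{val}$ is symmetric (invariant under permutation of arguments). $I(P)$ is the set of nonempty subsets of $P$, $C(P)$ the set of nonempty subsets of $I(P)$. PIL formulas: $\phi::=true\mid p\mid\overline{\phi}\mid\phi\vee\phi$ ($p\in P$), $\alpha\models_i p$ iff $p\in\alpha$, negation and disjunction as usual, $\wedge$ via De Morgan. A full monomial is a PIL formula $\bigwedge_{p\in P_+}p\wedge\bigwedge_{p\in P_-}\overline p$ with $P_+\cup P_-=P$, $P_+\cap P_-=\emptyset$. PCL formulas: $f::=true\mid\phi\mid\neg f\mid f\sqcup f\mid f+f$; $\gamma\models\phi$ iff every $\alpha\in\gamma$ satisfies $\phi$; $\neg,\sqcup$ are complement and union; $\gamma\models f_1+f_2$ iff $\gamma=\gamma_1\cup\gamma_2$ with $\gamma_1,\gamma_2\in C(P)$, $\gamma_1\models f_1,\gamma_2\models f_2$. $\sum$ denotes $+$-combination. w$_{\text{pvm}}$PCL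 formulas ($PCL(D,P)$): $\zeta::=d\mid f\mid\zeta\oplus\zeta\mid\zeta\otimes\zeta\mid\zeta\uplus\zeta\mid *\zeta$; semantics $\|\zeta\|:C(P)\to D$: $\|d\|(\gamma)=d$; $\|f\|(\gamma)\in\{0,1\}$ is $1$ iff $\gamma\models f$; $\oplus,\otimes$ pointwise; $\|\zeta_1\uplus\zeta_2\|(\gamma)=\bigoplus(\|\zeta_1\|(\gamma_1)\otimes\|\zeta_2\|(\gamma_2))$ over disjoint $\gamma_1,\gamma_2\in C(P)$ with union $\gamma$; $\|*\zeta\|(\gamma)=\bigoplus_{n>0}\bigoplus\mathrm{val}(\|\zeta\|(\gamma_1),\dots,\|\zeta\|(\gamma_n))$ over pairwise disjoint $\gamma_1,\dots,\gamma_n\in C(P)$ with union $\gamma$. $\equiv$ means equality of semantics on all of $C(P)$. A formula $\bigoplus_{i\in I}\left(d_i\otimes\sum_{j\in J_i}m_{i,j}\right)$ (finite nonempty index sets, $d_i\in D$, full monomials $m_{i,j}$) is in full normal form; full normal forms are required to satisfy: (i) $j\ne j'$ implies $m_{i,j}\not\equiv m_{i,j'}$; (ii) $i\ne i'$ implies $\sum_{j\in J_i}m_{i,j}\not\equiv\sum_{j\in J_{i'}}m_{i',j}$. *)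

(* Defs.v *)
From mathcomp Require Import all_boot.
From Stdlib Require Import Permutation.

Set Implicit Arguments.
Unset Strict Implicit.
Unset Printing Implicit Defensive.

Record pvMonoid := PvMonoid {
  pv_car :> Type;
  pv_add : pv_car -> pv_car -> pv_car;
  pv_zero : pv_car;
  pv_val : seq pv_car -> pv_car;   (* only used on nonempty sequences *)
  pv_mul : pv_car -> pv_car -> pv_car;
  pv_one : pv_car;
  pv_addA : forall a b c, pv_add a (pv_add b c) = pv_add (pv_add a b) c;
  pv_addC : forall a b, pv_add a b = pv_add b a;
  pv_add0 : forall a, pv_add pv_zero a = a;
  pv_val1 : forall d, pv_val [:: d] = d;
  pv_val0 : forall s1 s2, pv_val (s1 ++ pv_zero :: s2) = pv_zero;
  pv_val_one : forall n, pv_val (nseq n.+1 pv_one) = pv_one;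
  pv_mul0l : forall d, pv_mul pv_zero d = pv_zero;
  pv_mul0r : forall d, pv_mul d pv_zero = pv_zero;
  pv_mul1l : forall d, pv_mul pv_one d = d;
  pv_mul1r : forall d, pv_mul d pv_one = d
}.

Definition pv_idempotent (D : pvMonoid) := forall d : D, pv_add d d = d.
Definition pv_symmetric (D : pvMonoid) :=
  forall s t : seq D, Permutation s t -> pv_val s = pv_val t.

Inductive pil (P : Type) :=
  | PTrue
  | PVar of P
  | PNeg of pil P
  | POr of pil P & pil P.

Definition PAnd (P : Type) (a b : pil P) : pil P := PNeg (POr (PNeg a) (PNeg b)).

Inductive pcl (P : Type) :=
  | CTrue
  | CPil of pil P
  | CNeg of pcl P
  | COr of pcl P & pcl P
  | CPlus of pcl P & pcl P.

Inductive wpcl (D : Type) (P : Type) :=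
  | WConst of D
  | WPcl of pcl P
  | WOplus of wpcl D P & wpcl D P
  | WOtimes of wpcl D P & wpcl D P
  | WUplus of wpcl D P & wpcl D P
  | WStar of wpcl D P.

Fixpoint iter_op (T : Type) (op : T -> T -> T) (x : T) (s : seq T) : T :=
  match s with
  | [::] => x
  | y :: s' => op x (iter_op op y s')
  end.

Definition big_op (T : Type) (op : T -> T -> T) (dflt : T) (s : seq T) : T :=
  match s with
  | [::] => dflt
  | x :: s' => iter_op op x s'
  end.

Section Semantics.
Variable P : finType.

(* full monomial with positive part A (literals in the order of enum P) *)
Definition lit (A : {set P}) (p : P) : pil P :=
  if p \in A then PVar p else PNeg (PVar p).
Definition fullmon (A : {set P}) : pil P :=
  big_op (@PAnd P) (PTrue P) [seq lit A p | p <- enum P].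

Fixpoint psat (phi : pil P) (a : {set P}) : bool :=
  match phi with
  | PTrue => true
  | PVar p => p \in a
  | PNeg phi' => ~~ psat phi' a
  | POr phi1 phi2 => psat phi1 a || psat phi2 a
  end.

(* C(P): nonempty sets of nonempty subsets of P *)
Definition inCP (g : {set {set P}}) : bool := (g != set0) && (set0 \notin g).

Fixpoint csat (f : pcl P) (g : {set {set P}}) : bool :=
  match f with
  | CTrue => true
  | CPil phi => [forall a in g, psat phi a]
  | CNeg f' => ~~ csat f' g
  | COr f1 f2 => csat f1 g || csat f2 g
  | CPlus f1 f2 => [exists g1 : {set {set P}}, exists g2 : {set {set P}},
        [&& inCP g1, inCP g2, g1 :|: g2 == g, csat f1 g1 & csat f2 g2]]
  end.

Variable D : pvMonoid.

Definition is_decomp (g : {set {set P}}) (n : nat) (t : n.-tuple {set {set P}}) : bool :=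
  [&& [forall i : 'I_n, inCP (tnth t i)],
      [forall i : 'I_n, forall j : 'I_n, (i != j) ==> [disjoint tnth t i & tnth t j]]
    & \bigcup_(i < n) tnth t i == g].

Fixpoint sem (z : wpcl D P) (g : {set {set P}}) : D :=
  match z with
  | WConst d => d
  | WPcl f => if csat f g then pv_one D else pv_zero D
  | WOplus z1 z2 => pv_add (sem z1 g) (sem z2 g)
  | WOtimes z1 z2 => pv_mul (sem z1 g) (sem z2 g)
  | WUplus z1 z2 =>
      \big[@pv_add D/pv_zero D]_(g1 : {set {set P}})
       \big[@pv_add D/pv_zero D]_(g2 : {set {set P}} |
            [&& inCP g1, inCP g2, [disjoint g1 & g2] & g1 :|: g2 == g])
          pv_mul (sem z1 g1) (sem z2 g2)
  | WStar z1 =>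
      (* n > #|g| admits no decomposition, so this is the sum over all n > 0 *)
      \big[@pv_add D/pv_zero D]_(1 <= n < #|g|.+1)
       \big[@pv_add D/pv_zero D]_(t : n.-tuple {set {set P}} | is_decomp g t)
          pv_val [seq sem z1 gi | gi <- t]
  end.

Definition wequiv (z1 z2 : wpcl D P) : Prop :=
  forall g : {set {set P}}, inCP g -> sem z1 g = sem z2 g.

(* sum_{j} m_{i,j} for a nonempty list of positive parts of full monomials *)
Definition msum (s : seq {set P}) : pcl P :=
  big_op (@CPlus P) (CTrue P) [seq CPil (fullmon A) | A <- s].

Definition woplus_big (s : seq (wpcl D P)) : wpcl D P :=
  big_op (@WOplus D P) (WConst P (pv_zero D)) s.
Definition wuplus_big (s : seq (wpcl D P)) : wpcl D P :=
  big_op (@WUplus D P) (WConst P (pv_zero D)) s.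

Definition fnf_formula (n : nat) (d : 'I_n -> D) (m : 'I_n -> seq {set P}) : wpcl D P :=
  woplus_big [seq WOtimes (WConst P (d i)) (WPcl D (msum (m i))) | i <- enum 'I_n].

Definition is_full_normal_form (n : nat) (m : 'I_n -> seq {set P}) : Prop :=
  0 < n /\
  (forall i, 0 < size (m i)) /\
  (forall i j j', j < size (m i) -> j' < size (m i) -> j != j' ->
     ~ wequiv (WPcl D (CPil (fullmon (nth set0 (m i) j))))
              (WPcl D (CPil (fullmon (nth set0 (m i) j'))))) /\
  (forall i i', i != i' -> ~ wequiv (WPcl D (msum (m i))) (WPcl D (msum (m i')))).

End Semantics.

(* Main.v *)
Require Import Defs.
From mathcomp Require Import all_boot.
From Stdlib Require Import Permutation.

Set Implicit Arguments. Unset Strict Implicit. Unset Printing Implicit Defensive.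

Lemma perm_Perm (T : eqType) (s t : seq T) : perm_eq s t -> Permutation s t.
Proof.
elim: s t => [|x s IH] t.
  by case: t => // y t /perm_size.
move=> pst; have xt : x \in t by rewrite -(perm_mem pst) mem_head.
case/splitPr: xt pst => t1 t2 pst.
have h : perm_eq s (t1 ++ t2).
  rewrite -(perm_cons x) (permPl pst) -[x :: t2]cat1s perm_catCA //.
apply: perm_trans (Permutation_middle _ _ _).
by apply: perm_skip; apply: IH.
Qed.

Section Alg.
Variable D : pvMonoid.
Hypothesis idem : pv_idempotent D.
Local Notation add := (@pv_add D).
Local Notation z0 := (pv_zero D).

Definition le (x y : D) := add x y = y.

Lemma le0 x : le z0 x. Proof. exact: pv_add0. Qed.
Lemma le_trans x y z : le x y -> le y z -> le x z.
Proof. rewrite /le => h1 h2. by rewrite -h2 pv_addA h1. Qed.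
Lemma le_antisym x y : le x y -> le y x -> x = y.
Proof. rewrite /le => h1 h2. by rewrite -h1 pv_addC. Qed.
Lemma le_refl x : le x x. Proof. exact: idem. Qed.
Lemma le_addl x y : le x (add x y). Proof. by rewrite /le pv_addA idem. Qed.
Lemma le_addr x y : le y (add x y). Proof. by rewrite pv_addC; apply le_addl. Qed.
Lemma le_add x y z : le x z -> le y z -> le (add x y) z.
Proof. rewrite /le => h1 h2. by rewrite -pv_addA h2 h1. Qed.

Lemma le_big (I : eqType) (r : seq I) (Pr : pred I) (F : I -> D) y :
  (forall x, x \in r -> Pr x -> le (F x) y) -> le (\big[add/z0]_(x <- r | Pr x) F x) y.
Proof.
elim: r => [|a r IH] H; first by rewrite big_nil; apply le0.
rewrite big_cons; case: ifP => Pa.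
  apply: le_add; first by apply: H; rewrite ?mem_head.
  by apply: IH => x xr; apply: H; rewrite inE xr orbT.
by apply: IH => x xr; apply: H; rewrite inE xr orbT.
Qed.

Lemma big_ge (I : eqType) (r : seq I) (Pr : pred I) (F : I -> D) x y :
  x \in r -> Pr x -> le y (F x) -> le y (\big[add/z0]_(x <- r | Pr x) F x).
Proof.
elim: r => [|a r IH] //; rewrite inE => /orP [/eqP <- | xr] Px h; rewrite big_cons.
  by rewrite Px; apply: le_trans h (le_addl _ _).
case: ifP => _; last exact: IH.
by apply: le_trans (IH xr Px h) (le_addr _ _).
Qed.

Definition ind (b : bool) : D := if b then pv_one D else z0.
Lemma add_ind a b : add (ind a) (ind b) = ind (a || b).
Proof. case: a; case: b => /=; rewrite ?idem ?pv_add0 //. by rewrite pv_addC pv_add0. Qed.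
Lemma mul_ind a b : @pv_mul D (ind a) (ind b) = ind (a && b).
Proof. case: a; case: b => /=; rewrite ?pv_mul1l ?pv_mul0l ?pv_mul0r //. Qed.
Lemma big_indb (I : Type) (r : seq I) (Pr : pred I) (b : I -> bool) :
  \big[add/z0]_(x <- r | Pr x) ind (b x) = ind (has (fun x => Pr x && b x) r).
Proof.
elim: r => [|a r IH]; first by rewrite big_nil.
rewrite big_cons /= IH; case: (Pr a) => //=. by rewrite add_ind.
Qed.

Lemma val_zero (T : Type) (F : T -> D) (s : seq T) x0 j :
  j < size s -> F (nth x0 s j) = z0 -> @pv_val D (map F s) = z0.
Proof.
move=> js h. rewrite -(cat_take_drop j s) (drop_nth x0 js) map_cat /= h. exact: pv_val0.
Qed.

End Alg.
Section Basic.
Variable T : finType.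

Lemma disjP (A B : {set T}) : reflect (forall x, x \in A -> x \in B -> False) [disjoint A & B].
Proof.
rewrite -setI_eq0; apply: (iffP eqP) => [h x xa xb | h].
  have: x \in A :&: B by rewrite inE xa xb.
  by rewrite h inE.
by apply/setP => x; rewrite inE in_set0; apply/andP => -[/h].
Qed.

Lemma in_bigcup_seq (I : Type) (r : seq I) (F : I -> {set T}) x :
  (x \in \bigcup_(i <- r) F i) = has (fun i => x \in F i) r.
Proof. elim: r => [|a r IH]; by rewrite ?big_nil ?in_set0 // big_cons in_setU IH. Qed.

End Basic.

Lemma pairwise_of (T : eqType) (r : rel T) s : uniq s ->
  (forall x y, x \in s -> y \in s -> x != y -> r x y) -> pairwise r s.
Proof.
elim: s => // a s IH; rewrite cons_uniq => /andP [an us] h; rewrite pairwise_cons; apply/andP; split.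
  apply/allP => y ys; apply: h; rewrite ?mem_head ?inE ?ys ?orbT //.
  by apply/eqP => ay; rewrite ay ys in an.
by apply: IH => // x y xs ys; apply: h; rewrite inE ?xs ?ys orbT.
Qed.

Lemma pairwise_mem (T : eqType) (r : rel T) s : symmetric r -> pairwise r s ->
  forall x y, x \in s -> y \in s -> x != y -> r x y.
Proof.
move=> sym; elim: s => // a s IH; rewrite pairwise_cons => /andP [/allP ha ps] x y.
rewrite !inE => /orP[/eqP->|xs] /orP[/eqP->|ys]; rewrite ?eqxx //.
- by move=> _; apply: ha.
- by move=> _; rewrite sym; apply: ha.
- by apply: IH.
Qed.
Section Csat.
Variable P : finType.

Lemma psat_and (x y : pil P) a : psat (PAnd x y) a = psat x a && psat y a.
Proof. by rewrite /= negb_or !negbK. Qed.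

Lemma psat_iter (x : pil P) s a :
  psat (iter_op (@PAnd P) x s) a = psat x a && all (fun y => psat y a) s.
Proof.
elim: s x => [|y s IH] x /=; first by rewrite andbT.
by rewrite /= negb_or !negbK IH.
Qed.

Lemma psat_fullmon (A a : {set P}) : psat (fullmon A) a = (a == A).
Proof.
have h : all (fun y => psat y a) [seq lit A p | p <- enum P] = (a == A).
  rewrite all_map; apply/allP/eqP => [H | ->].
    apply/setP => p; have := H p; rewrite mem_enum /lit /= => /(_ isT).
    by case: (p \in A) => /=; [|move/negPf].
  by move=> p _; rewrite /= /lit; case: ifP => /= h; rewrite h.
rewrite /fullmon; case E: [seq lit A p | p <- enum P] => [|y s] /=.
  by rewrite -h E.
by rewrite psat_iter -h E.
Qed.

Lemma csat_mon (A : {set P}) g : inCP g -> csat (CPil (fullmon A)) g = (g == [set A]).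
Proof.
case/andP => /set0Pn [y yg] _ /=.
apply/forall_inP/eqP => [H | -> a]; last by rewrite in_set1 psat_fullmon.
have yA : y = A by apply/eqP; rewrite -psat_fullmon H.
apply/setP => x; rewrite in_set1; apply/idP/eqP => [/H | ->].
  by rewrite psat_fullmon => /eqP.
by rewrite -yA.
Qed.

Lemma csat_msum (A : {set P}) s g : inCP g ->
  csat (msum (A :: s)) g = (g == [set x in A :: s]).
Proof.
elim: s A g => [|B s IH] A g cg.
  have -> : msum [:: A] = CPil (fullmon A) by [].
  rewrite csat_mon //; congr (_ == _); apply/setP => x; by rewrite !inE.
have -> : msum (A :: B :: s) = CPlus (CPil (fullmon A)) (msum (B :: s)) by [].
rewrite /=; apply/existsP/eqP => [[g1 /existsP [g2 /and5P [c1 c2 /eqP U h1 h2]]] | E].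
  have h1' : csat (CPil (fullmon A)) g1 := h1.
  rewrite csat_mon // in h1'; rewrite IH // in h2.
  rewrite -U (eqP h1') (eqP h2); apply/setP => x; by rewrite !inE.
have gs : forall x, x \in g = (x \in A :: B :: s) by move=> x; rewrite E inE.
case/andP: cg => _ g0.
exists [set A]; apply/existsP; exists [set x in B :: s].
apply/and5P; split.
- apply/andP; split; first by apply/set0Pn; exists A; rewrite inE.
  rewrite in_set1; apply: contra g0 => /eqP ->; by rewrite gs mem_head.
- apply/andP; split; first by apply/set0Pn; exists B; rewrite !inE eqxx.
  rewrite inE; apply: contra g0 => h; by rewrite gs inE h orbT.
- by rewrite E; apply/eqP/setP => x; rewrite !inE.
- by change (csat (CPil (fullmon A)) [set A]); rewrite csat_mon ?eqxx //; apply/andP; split; [apply/set0Pn; exists A; rewrite inE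
     | rewrite in_set1; apply: contra g0 => /eqP ->; by rewrite gs mem_head].
- rewrite IH ?eqxx //; apply/andP; split; first by apply/set0Pn; exists B; rewrite !inE eqxx.
  rewrite inE; apply: contra g0 => h; by rewrite gs inE h orbT.
Qed.

End Csat.
Section Main.
Variable P : finType.
Variable D : pvMonoid.
Hypothesis idem : pv_idempotent D.
Variable n : nat.
Variable m : 'I_n -> seq {set P}.
Variable d : 'I_n -> D.
Hypothesis hm : forall i, 0 < size (m i).

Local Notation add := (@pv_add D).
Local Notation z0 := (pv_zero D).
Local Notation mul := (@pv_mul D).

Definition S i : {set {set P}} := [set x in m i].
Definition dsj i j := [disjoint S i & S j].
Definition goodl (l : seq 'I_n) g :=
  all (fun i => inCP (S i)) l && pairwise dsj l && (\bigcup_(i <- l) S i == g).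

Lemma semP i g : inCP g -> sem (WPcl D (msum (m i))) g = ind D (g == S i).
Proof.
move=> cg; rewrite /= /S; case E: (m i) (hm i) => [|A s] // _.
by rewrite csat_msum.
Qed.

Lemma inCP_bigcup j l : all (fun k => inCP (S k)) (j :: l) -> inCP (\bigcup_(k <- j :: l) S k).
Proof.
move=> /allP h; apply/andP; split.
  case/andP: (h j (mem_head _ _)) => /set0Pn [x xS] _.
  by apply/set0Pn; exists x; rewrite in_bigcup_seq /= xS.
rewrite in_bigcup_seq; apply/hasPn => k kl; by case/andP: (h k kl).
Qed.

Lemma disj_bigcup a l : [disjoint S a & \bigcup_(k <- l) S k] = all (dsj a) l.
Proof.
apply/disjP/allP => [H k kl | H x xA].
  apply/disjP => x xA xk; apply: (H x xA); rewrite in_bigcup_seq; apply/hasP; by exists k.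
rewrite in_bigcup_seq => /hasP [k kl xk].
by move/disjP: (H k kl) => /(_ x xA xk).
Qed.

Lemma sem_uplus (z1 z2 : wpcl D P) g : sem (WUplus z1 z2) g =
  \big[add/z0]_(g1 : {set {set P}}) \big[add/z0]_(g2 : {set {set P}} |
     [&& inCP g1, inCP g2, [disjoint g1 & g2] & g1 :|: g2 == g]) mul (sem z1 g1) (sem z2 g2).
Proof. by []. Qed.

Lemma semU l i g : inCP g ->
  sem (wuplus_big [seq WPcl D (msum (m j)) | j <- i :: l]) g = ind D (goodl (i :: l) g).
Proof.
elim: l i g => [|j l IH] i g cg.
  have -> : wuplus_big [seq WPcl D (msum (m j)) | j <- [:: i]] = WPcl D (msum (m i)) by [].
  rewrite semP //; congr (ind D _); rewrite /goodl big_cons big_nil setU0 eq_sym.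
  case: eqP => [e|]; last by rewrite andbF.
  by move: cg; rewrite -e /= => ->.
have -> : wuplus_big [seq WPcl D (msum (m k)) | k <- [:: i, j & l]] =
   WUplus (WPcl D (msum (m i))) (wuplus_big [seq WPcl D (msum (m k)) | k <- j :: l]) by [].
rewrite sem_uplus.
transitivity (\big[add/z0]_(g1 : {set {set P}}) \big[add/z0]_(g2 : {set {set P}} |
     [&& inCP g1, inCP g2, [disjoint g1 & g2] & g1 :|: g2 == g])
        ind D ((g1 == S i) && goodl (j :: l) g2)).
  apply: eq_bigr => g1 _; apply: eq_bigr => g2 /and4P [c1 c2 _ _].
  by rewrite semP // IH // mul_ind.
under eq_bigr => g1 _ do rewrite (big_indb idem).
rewrite (big_indb idem); congr (ind D _).
apply/hasP/idP => [[g1 _ /hasP [g2 _ /andP [/and4P [c1 c2 dis /eqP U] /andP [/eqP e1 gl]]]] | G].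
  subst g1 g.
  move: (gl) => /andP [/andP [al pl] /eqP ug2].
  rewrite /goodl big_cons ug2 eqxx andbT pairwise_cons pl andbT.
  rewrite -disj_bigcup ug2 dis andbT.
  by apply/andP; split.
case/andP: G => /andP [al pl] /eqP U.
move: al => /andP [ci al].
rewrite pairwise_cons in pl; case/andP: pl => di pl.
rewrite big_cons in U.
exists (S i); first exact: mem_index_enum.
apply/hasP; exists (\bigcup_(k <- j :: l) S k); first exact: mem_index_enum.
have ag : all (fun k => inCP (S k)) (j :: l) := al.
by rewrite ci (inCP_bigcup ag) disj_bigcup di U !eqxx /goodl ag pl eqxx.
Qed.

Lemma sem_woplus (s : seq (wpcl D P)) g : sem (woplus_big s) g = \big[add/z0]_(z <- s) sem z g.
Proof.
case: s => [|x s]; first by rewrite big_nil.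
elim: s x => [|y s IH] x; first by rewrite big_cons big_nil pv_addC pv_add0.
have -> : woplus_big [:: x, y & s] = WOplus x (woplus_big (y :: s)) by [].
by rewrite big_cons -IH.
Qed.

Lemma Zsem g : inCP g ->
  sem (fnf_formula d m) g = \big[add/z0]_(i <- enum 'I_n) mul (d i) (ind D (g == S i)).
Proof.
move=> cg; rewrite /fnf_formula sem_woplus big_map; apply: eq_bigr => i _.
by rewrite -semP.
Qed.

Hypothesis Sinj : injective S.

Lemma Z_S i : inCP (S i) -> sem (fnf_formula d m) (S i) = d i.
Proof.
move=> ci; rewrite Zsem //; apply: le_antisym.
  apply: le_big => j _ _; case: (eqVneq (S i) (S j)) => [/Sinj -> | ne] /=.
    by rewrite pv_mul1r; exact: (le_refl idem).
  by rewrite pv_mul0r; apply: le0.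
apply: (big_ge idem (x := i)); first by rewrite mem_enum.
  by [].
by rewrite eqxx /= pv_mul1r; exact: (le_refl idem).
Qed.

Lemma Z_none g : inCP g -> (forall i, g != S i) -> sem (fnf_formula d m) g = z0.
Proof.
move=> cg h; rewrite Zsem //; apply: le_antisym; last exact: le0.
by apply: le_big => i _ _; rewrite (negbTE (h i)) /= pv_mul0r; apply: le0.
Qed.

Lemma decomp_size g k (t : k.-tuple {set {set P}}) : is_decomp g t -> k <= #|g|.
Proof.
case/and3P => /forallP c /forallP dis /eqP U.
pose f j := odflt set0 [pick x in tnth t j].
have fin : forall j, f j \in tnth t j.
  move=> j; rewrite /f; case: pickP => [x -> // | h].
  by case/andP: (c j) => /set0Pn [x]; rewrite h.
have finj : injective f.
  move=> j j' e; apply/eqP; apply/negPn/negP => ne.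
  move: (forallP (dis j) j'); rewrite ne /= => /disjP H; apply: (H (f j) (fin j)); rewrite e; exact: fin.
have : #|[set f j | j in [set: 'I_k]]| <= #|g|.
  apply: subset_leq_card; apply/subsetP => x /imsetP [j _ ->].
  rewrite -U; apply/bigcupP; by exists j.
by rewrite card_imset // cardsT card_ord.
Qed.

Hypothesis n_gt0 : 0 < n.
Hypothesis symm : pv_symmetric D.

Lemma semU' l g : l != [::] -> inCP g ->
  sem (wuplus_big [seq WPcl D (msum (m j)) | j <- l]) g = ind D (goodl l g).
Proof. by case: l => // i l _; apply: semU. Qed.

Lemma enum_ne0 (I' : {set 'I_n}) : I' != set0 -> enum I' != [::].
Proof.
move=> /set0Pn [i iI]; apply/eqP => E.
by move: iI; rewrite -mem_enum E.
Qed.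

Lemma sem_otimes (z1 z2 : wpcl D P) g : sem (WOtimes z1 z2) g = mul (sem z1 g) (sem z2 g).
Proof. by []. Qed.
Lemma sem_const (v : D) g : sem (WConst P v) g = v.
Proof. by []. Qed.
Lemma sem_star (z : wpcl D P) g : sem (WStar z) g =
  \big[add/z0]_(1 <= k < #|g|.+1) \big[add/z0]_(t : k.-tuple {set {set P}} | is_decomp g t)
     pv_val [seq sem z gi | gi <- t].
Proof. by []. Qed.

Definition rhs1 := woplus_big
       [seq WOtimes (WConst P (pv_val [seq d i | i <- enum I']))
                    (wuplus_big [seq WPcl D (msum (m i)) | i <- enum I'])
       | I' : {set 'I_n} <- enum [set I' : {set 'I_n} | I' != set0]].

Lemma main_i g : inCP g -> sem (WStar (fnf_formula d m)) g = sem rhs1 g.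
Proof.
move=> cg; rewrite sem_star /rhs1 sem_woplus big_map.
apply: le_antisym.
- apply: le_big => k kin _; apply: le_big => t _ dec.
  have cti : forall j, inCP (tnth t j) by case/and3P: dec => /forallP.
  have dis : forall j j', j != j' -> [disjoint tnth t j & tnth t j'].
    by case/and3P: dec => _ /forallP h _ j j' ne; move: (forallP (h j) j'); rewrite ne.
  have U : \bigcup_(j < k) tnth t j = g by case/and3P: dec => _ _ /eqP.
  have k_gt0 : 0 < k by move: kin; rewrite mem_index_iota => /andP [].
  case: (boolP [forall j, [exists i, tnth t j == S i]]) => [/forallP H | /forallPn [j /existsPn H]]; last first.
    rewrite (@val_zero D _ _ _ set0 j); first exact: le0.
      by rewrite size_tuple.
    by rewrite -tnth_nth; apply: Z_none.
  pose f j := odflt (Ordinal n_gt0) [pick i | tnth t j == S i].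
  have hf : forall j, tnth t j = S (f j).
    move=> j; rewrite /f; case: pickP => [i /eqP // | h].
    by case/existsP: (H j) => i; rewrite h.
  have finj : injective f.
    move=> j j' e; apply/eqP; apply/negPn/negP => ne.
    move: (dis j j' ne); rewrite !hf e => /disjP H'.
    case/andP: (cti j') => /set0Pn [x xS] _; rewrite hf in xS.
    exact: (H' x xS xS).
  pose I' := [set i | [exists j, f j == i]].
  have memI : forall i, (i \in I') = [exists j, f j == i] by move=> i; rewrite inE.
  apply: (big_ge idem (x := I')).
  + rewrite mem_enum inE; apply/set0Pn; exists (f (Ordinal k_gt0)); rewrite memI.
    by apply/existsP; exists (Ordinal k_gt0).
  + by [].
  have ne : enum I' != [::].
    apply: enum_ne0; apply/set0Pn; exists (f (Ordinal k_gt0)); rewrite memI.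
    by apply/existsP; exists (Ordinal k_gt0).
  rewrite sem_otimes sem_const semU' //.
  have G : goodl (enum I') g.
    rewrite /goodl; apply/andP; split; first (apply/andP; split).
    * apply/allP => i; rewrite mem_enum memI => /existsP [j /eqP <-]; by rewrite -hf.
    * apply: pairwise_of; first exact: enum_uniq.
      move=> x y; rewrite !mem_enum !memI => /existsP [j /eqP <-] /existsP [j' /eqP <-] nxy.
      rewrite /dsj -!hf; apply: dis; by apply: contra nxy => /eqP ->.
    * apply/eqP/setP => A; rewrite in_bigcup_seq -U; apply/hasP/bigcupP => [[i] | [j _ Aj]].
        rewrite mem_enum memI => /existsP [j /eqP <-]; rewrite -hf => Aj; by exists j.
      exists (f j); first by rewrite mem_enum memI; apply/existsP; exists j.
      by rewrite -hf.
  rewrite G pv_mul1r.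
  have -> : [seq sem (fnf_formula d m) gi | gi <- t] = [seq d i | i <- map f (enum 'I_k)].
    rewrite -{1}(map_tnth_enum t) -!map_comp; apply: eq_map => j /=.
    by rewrite hf Z_S // -hf.
  rewrite (@symm _ [seq d i | i <- enum I']); first exact: (le_refl idem).
  apply: Permutation_map; apply: perm_Perm; apply: uniq_perm.
  + by rewrite map_inj_uniq // enum_uniq.
  + exact: enum_uniq.
  + move=> i; rewrite mem_enum memI; apply/mapP/existsP => [[j _ ->] | [j /eqP <-]].
      by exists j.
    by exists j; rewrite ?mem_enum.
- apply: le_big => I' I'in _.
  have ne : enum I' != [::] by apply: enum_ne0; move: I'in; rewrite mem_enum inE.
  rewrite sem_otimes sem_const semU' //.
  case G: (goodl (enum I') g); last by rewrite pv_mul0r; apply: le0.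
  rewrite pv_mul1r.
  move: (G) => /andP [/andP [/allP al pl] /eqP U].
  set e := enum I' in ne al pl U *.
  pose t := [tuple of map S (in_tuple e)].
  have te : forall j, tnth t j = S (tnth (in_tuple e) j) by move=> j; rewrite tnth_map.
  have dec : is_decomp g t.
    apply/and3P; split.
    + apply/forallP => j; rewrite te; apply: al; exact: mem_tnth.
    + apply/forallP => j; apply/forallP => j'; apply/implyP => nj.
      rewrite !te; apply: (pairwise_mem (r := dsj) (s := e) _ pl); try exact: mem_tnth.
        by move=> x y; rewrite /dsj disjoint_sym.
      rewrite !(tnth_nth (Ordinal n_gt0)) /= nth_uniq //; exact: enum_uniq.
    + rewrite -U; apply/eqP.
      rewrite big_tnth; apply: eq_bigr => j _; by rewrite te.
  apply: (big_ge idem (x := size e)).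
    by rewrite mem_index_iota ltnS (decomp_size dec) andbT lt0n size_eq0 ne.
    by [].
  apply: (big_ge idem (x := t)); [exact: mem_index_enum | exact: dec | ].
  have -> : [seq sem (fnf_formula d m) gi | gi <- t] = [seq d i | i <- e].
    transitivity [seq sem (fnf_formula d m) gi | gi <- map S e]; first by [].
    rewrite -map_comp; apply/eq_in_map => i ie /=; rewrite Z_S //; exact: al.
  exact: (le_refl idem).
Qed.

Lemma main_ii g : inCP g ->
  sem (WOtimes (WStar (fnf_formula d m))
                  (wuplus_big [seq WPcl D (msum (m i)) | i <- enum 'I_n])) g =
  sem (WOtimes (WConst P (pv_val [seq d i | i <- enum 'I_n]))
                  (wuplus_big [seq WPcl D (msum (m i)) | i <- enum 'I_n])) g.
Proof.
move=> cg; rewrite !sem_otimes sem_const.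
have ne : enum 'I_n != [::].
  apply/eqP => E; have : Ordinal n_gt0 \in enum 'I_n by rewrite mem_enum.
  by rewrite E.
rewrite semU' //.
case G: (goodl (enum 'I_n) g); last by rewrite !pv_mul0r.
rewrite !pv_mul1r main_i // /rhs1 sem_woplus big_map.
move: (G) => /andP [/andP [/allP al pl] /eqP U].
apply: le_antisym.
- apply: le_big => I' I'in _.
  have ne' : enum I' != [::] by apply: enum_ne0; move: I'in; rewrite mem_enum inE.
  rewrite sem_otimes sem_const semU' //.
  case G': (goodl (enum I') g); last by rewrite pv_mul0r; apply: le0.
  rewrite pv_mul1r.
  have -> : I' = [set: 'I_n].
    apply/setP => i; rewrite inE; apply/negPn/negP => iI.
    move: G' => /andP [_ /eqP U'].
    have ci : inCP (S i) by apply: al; rewrite mem_enum.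
    case/andP: ci => /set0Pn [A AS] _.
    have : A \in g by rewrite -U in_bigcup_seq; apply/hasP; exists i; rewrite ?mem_enum.
    rewrite -U' in_bigcup_seq => /hasP [i' i'I AS'].
    have nii : i != i' by apply: contra iI => /eqP ->; rewrite -mem_enum.
    have sd : symmetric dsj by move=> x y; rewrite /dsj disjoint_sym.
    have := pairwise_mem sd pl (x := i) (y := i').
    rewrite !mem_enum => /(_ isT isT nii) /disjP H.
    exact: (H A AS AS').
  rewrite enum_setT -enumT; exact: (le_refl idem).
- apply: (big_ge idem (x := [set: 'I_n])).
  + rewrite mem_enum inE; apply/set0Pn; exists (Ordinal n_gt0); by rewrite inE.
  + by [].
  rewrite sem_otimes sem_const enum_setT -enumT semU' // G pv_mul1r; exact: (le_refl idem).
Qed.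

End Main.

Theorem mainTheorem15 (D : pvMonoid) (P : finType) (n : nat)
    (d : 'I_n -> D) (m : 'I_n -> seq {set P}) :
  pv_idempotent D -> pv_symmetric D -> 0 < #|P| ->
  is_full_normal_form D m ->
  wequiv (WStar (fnf_formula d m))
    (woplus_big
       [seq WOtimes (WConst P (pv_val [seq d i | i <- enum I']))
                    (wuplus_big [seq WPcl D (msum (m i)) | i <- enum I'])
       | I' : {set 'I_n} <- enum [set I' : {set 'I_n} | I' != set0]])
  /\
  wequiv (WOtimes (WStar (fnf_formula d m))
                  (wuplus_big [seq WPcl D (msum (m i)) | i <- enum 'I_n]))
         (WOtimes (WConst P (pv_val [seq d i | i <- enum 'I_n]))
                  (wuplus_big [seq WPcl D (msum (m i)) | i <- enum 'I_n])).
Proof.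
move=> idem symm _ [n_gt0 [hm [_ hdist]]].
have Sinj : injective (S m).
  move=> i i' e; apply/eqP; apply/negPn/negP => ne.
  apply: (hdist i i' ne) => g cg; by rewrite !(@semP _ D _ _ hm) // e.
split => g cg.
- exact: (main_i idem d hm Sinj n_gt0 symm cg).
- exact: (main_ii idem d hm Sinj n_gt0 symm cg).
Qed.
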